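(* Let $\{\mathbf{x}_i\}_{i=1}^N\subset\mathbb{R}^{D_x}$ and $\{\mathbf{y}_i\}_{i=1}^N\subset\mathbb{R}^{D_y}$ be zero-mean data, $\mathbf{X}=[\mathbf{x}_1\,\cdots\,\mathbf{x}_N]$, $\mathbf{Y}=[\mathbf{y}_1\,\cdots\,\mathbf{y}_N]$, $\boldsymbol{\Sigma}_x=\frac1N\sum_i\mathbf{x}_i\mathbf{x}_i^\top$, $\boldsymbol{\Sigma}_y=\frac1N\sum_i\mathbf{y}_i\mathbf{y}_i^\top$, $\boldsymbol{\Sigma}_{xy}=\frac1N\sum_i\mathbf{x}_i\mathbf{y}_i^\top$. Let $\mathbf{W}=(w_{ij})\in\mathbb{R}^{N\times N}$ be a symmetric matrix with nonnegative entries, $d_i=\sum_{j=1}^N w_{ij}$, $d_{\max}=\max_i d_i$, $\mathbf{D}=\mathrm{diag}(d_1,\dots,d_N)$, $\mathbf{L}_{\mathcal{G}}=\mathbf{D}-\mathbf{W}$, and let $\gamma\ge 0$. Define $$f(\mathbf{u},\mathbf{v})=\mathbf{u}^\top\boldsymbol{\Sigma}_{xy}\mathbf{v}-\gamma\mathbf{u}^\top\mathbf{X}\mathbf{L}_{\mathcal{G}}\mathbf{Y}^\top\mathbf{v}-\frac{\gamma}{2}\sum_{i=1}^N d_i(\mathbf{u}^\top\mathbf{x}_i-\mathbf{v}^\top\mathbf{y}_i)^2,$$ and let $g(\mathbf{u},\mathbf{v})$ be obtained from $f$ by replacing $\sum_{i=1}^N d_i(\mathbf{u}^\top\mathbf{x}_i-\mathbf{v}^\top\mathbf{y}_i)^2$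 with $2d_{\max}N(\mathbf{u}^\top\boldsymbol{\Sigma}_x\mathbf{u}+\mathbf{v}^\top\boldsymbol{\Sigma}_y\mathbf{v})$. Then $g(\mathbf{u},\mathbf{v})\le f(\mathbf{u},\mathbf{v})$ for all $\mathbf{u}\in\mathbb{R}^{D_x},\mathbf{v}\in\mathbb{R}^{D_y}$, and on the set $\{\mathbf{u}^\top\boldsymbol{\Sigma}_x\mathbf{u}=1,\ \mathbf{v}^\top\boldsymbol{\Sigma}_y\mathbf{v}=1\}$, $g$ differs from $\mathbf{u}^\top\boldsymbol{\Sigma}_{xy}\mathbf{v}-\gamma\mathbf{u}^\top\mathbf{X}\mathbf{L}_{\mathcal{G}}\mathbf{Y}^\top\mathbf{v}$ only by a constant; hence maximizing $g$ subject to these constraints is equivalent to the problem $$\max_{\mathbf{u},\mathbf{v}}\ \mathbf{u}^\top\boldsymbol{\Sigma}_{xy}\mathbf{v}-\gamma\mathbf{u}^\top\mathbf{X}\mathbf{L}_{\mathcal{G}}\mathbf{Y}^\top\mathbf{v}\quad\text{s.t.}\quad \mathbf{u}^\top\boldsymbol{\Sigma}_x\mathbf{u}=1,\ \mathbf{v}^\top\boldsymbol{\Sigma}_y\mathbf{v}=1.$$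
   Context: $\mathbf{W}$ is the weighted adjacency matrix of an undirected graph $\mathcal{G}$ on $N$ nodes (the common-source graph), and $\mathbf{L}_{\mathcal{G}}$ is its Laplacian. The last displayed problem is called graph CCA (gCCA). *)

(* Defs.v *)
From HB Require Import structures.
From mathcomp Require Import all_boot all_order all_algebra.
Set Implicit Arguments. Unset Strict Implicit. Unset Printing Implicit Defensive.
Import Order.TTheory GRing.Theory Num.Theory.
Local Open Scope ring_scope.

Section GCCA.
Variable R : realFieldType.

Definition bform (m n : nat) (u : 'cV[R]_m) (M : 'M[R]_(m, n)) (v : 'cV[R]_n) : R :=
  (u^T *m M *m v) 0 0.

Definition ip (m : nat) (u x : 'cV[R]_m) : R := (u^T *m x) 0 0.

Definition Sigma (Dx Dy N : nat) (X : 'M[R]_(Dx, N)) (Y : 'M[R]_(Dy, N)) : 'M[R]_(Dx, Dy) :=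
  (N%:R)^-1 *: \sum_(i < N) (col i X *m (col i Y)^T).

Definition deg (N : nat) (W : 'M[R]_N) (i : 'I_N) : R := \sum_(j < N) W i j.

(* d_max = max_i d_i (degrees are nonnegative, so 0 is a neutral start) *)
Definition dmax (N : nat) (W : 'M[R]_N) : R := \big[Num.max/0]_(i < N) deg W i.

Definition laplacian (N : nat) (W : 'M[R]_N) : 'M[R]_N :=
  diag_mx (\row_i deg W i) - W.

Definition gcca_obj (Dx Dy N : nat) (X : 'M[R]_(Dx, N)) (Y : 'M[R]_(Dy, N))
  (W : 'M[R]_N) (gamma : R) (u : 'cV[R]_Dx) (v : 'cV[R]_Dy) : R :=
  bform u (Sigma X Y) v - gamma * bform u (X *m laplacian W *m Y^T) v.

Definition f_obj (Dx Dy N : nat) (X : 'M[R]_(Dx, N)) (Y : 'M[R]_(Dy, N))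
  (W : 'M[R]_N) (gamma : R) (u : 'cV[R]_Dx) (v : 'cV[R]_Dy) : R :=
  gcca_obj X Y W gamma u v
  - gamma / 2%:R * \sum_(i < N) deg W i * (ip u (col i X) - ip v (col i Y)) ^+ 2.

Definition g_obj (Dx Dy N : nat) (X : 'M[R]_(Dx, N)) (Y : 'M[R]_(Dy, N))
  (W : 'M[R]_N) (gamma : R) (u : 'cV[R]_Dx) (v : 'cV[R]_Dy) : R :=
  gcca_obj X Y W gamma u v
  - gamma / 2%:R * (2%:R * dmax W * N%:R * (bform u (Sigma X X) u + bform v (Sigma Y Y) v)).

Definition constr (Dx Dy N : nat) (X : 'M[R]_(Dx, N)) (Y : 'M[R]_(Dy, N))
  (u : 'cV[R]_Dx) (v : 'cV[R]_Dy) : Prop :=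
  bform u (Sigma X X) u = 1 /\ bform v (Sigma Y Y) v = 1.

End GCCA.

(* Main.v *)
Require Import Defs.
From HB Require Import structures.
From mathcomp Require Import all_boot all_order all_algebra.
From mathcomp Require Import ring lra.
Import Order.TTheory GRing.Theory Num.Theory.
Local Open Scope ring_scope.

Lemma bform_Sigma (R : realFieldType) (D N : nat) (X : 'M[R]_(D, N)) (u : 'cV[R]_D) :
  N%:R * bform u (Sigma X X) u = \sum_(i < N) (ip u (col i X)) ^+ 2.
Proof.
case: N X => [|n] X.
  by rewrite mul0r big_ord0.
rewrite /bform /Sigma -!mulmxA -scalemxAl -scalemxAr mxE mulrA mulfV ?mul1r; last first.
  by rewrite pnatr_eq0.
rewrite mulmx_suml mulmx_sumr summxE; apply: eq_bigr => i _.
have E : forall x : 'cV[R]_D, u^T *m ((x *m x^T) *m u) = (u^T *m x) *m (x^T *m u) by move=> x; rewrite !mulmxA.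
rewrite E /ip mxE big_ord1.
have -> : ((col i X)^T *m u) = (u^T *m col i X)^T by rewrite trmx_mul trmxK.
by rewrite expr2 [X in _ * X]mxE.
Qed.

Theorem proposition1 (R : realFieldType) (Dx Dy N : nat)
  (X : 'M[R]_(Dx, N)) (Y : 'M[R]_(Dy, N)) (W : 'M[R]_N) (gamma : R)
  (hX0 : \sum_(i < N) col i X = 0) (hY0 : \sum_(i < N) col i Y = 0)
  (hWsym : W^T = W) (hWnn : forall i j, 0 <= W i j) (hgamma : 0 <= gamma) :
  (forall u v, g_obj X Y W gamma u v <= f_obj X Y W gamma u v)
  /\ (exists c : R, forall u v, constr X Y u v ->
        g_obj X Y W gamma u v = gcca_obj X Y W gamma u v + c)
  /\ (forall u v, constr X Y u v ->
        ((forall u' v', constr X Y u' v' -> g_obj X Y W gamma u' v' <= g_obj X Y W gamma u v)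
         <-> (forall u' v', constr X Y u' v' ->
                gcca_obj X Y W gamma u' v' <= gcca_obj X Y W gamma u v))).
Proof.
have Hc : forall u v, constr X Y u v ->
    g_obj X Y W gamma u v = gcca_obj X Y W gamma u v
       + (- (gamma / 2%:R * (2%:R * dmax W * N%:R * 2%:R))).
  by move=> u v [hu hv]; rewrite /g_obj hu hv.
split; last split.
- move=> u v; rewrite /g_obj /f_obj lerD2l lerN2.
  apply: ler_wpM2l; first by apply: divr_ge0 => //; rewrite ler0n.
  have -> : 2%:R * dmax W * N%:R * (bform u (Sigma X X) u + bform v (Sigma Y Y) v)
     = 2%:R * dmax W * (N%:R * bform u (Sigma X X) u + N%:R * bform v (Sigma Y Y) v)
    by ring.
  rewrite !bform_Sigma -big_split mulr_sumr /=.
  apply: ler_sum => i _.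
  have d0 : 0 <= deg W i by apply: sumr_ge0 => j _.
  have dm : deg W i <= dmax W by rewrite /dmax; exact: le_bigmax.
  set a := ip u (col i X); set b := ip v (col i Y).
  have h1 : (a - b) ^+ 2 <= 2%:R * (a ^+ 2 + b ^+ 2).
    have : 0 <= (a + b) ^+ 2 by apply: sqr_ge0.
    rewrite !expr2; lra.
  have h2 : 0 <= (a - b) ^+ 2 by apply: sqr_ge0.
  have s0 : 0 <= a ^+ 2 + b ^+ 2 by apply: addr_ge0; apply: sqr_ge0.
  apply: (le_trans (ler_wpM2l d0 h1)).
  rewrite mulrCA -mulrA; apply: ler_wpM2l; first by rewrite ler0n.
  exact: ler_wpM2r.
- by eexists; exact: Hc.
- move=> u v cuv; split=> H u' v' c'.
  + by have := H u' v' c'; rewrite !Hc // lerD2r.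
  + by rewrite !Hc // lerD2r; exact: H.
Qed.
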